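(* Let $K$ be a field, $A$ a cocommutative Hopf algebra over $K$ with antipode $S$, and $X,Y$ normal Hopf subalgebras of $A$. Let $[X,Y]$ be the subalgebra of $A$ generated by all elements $\{a,b\}=a_1b_1S(a_2)S(b_2)$ with $a\in X$, $b\in Y$. Then $[X,Y]$ is a normal Hopf subalgebra of $A$.
   Context: Sweedler notation $\Delta(a)=a_1\otimes a_2$. A Hopf subalgebra $D$ of $A$ is normal if $a_1dS(a_2)\in D$ for all $a\in A$, $d\in D$. *)

(* Defs.v *)
(* The tensor product A (x) A is not available, so an element of A (x) A is
   represented by a finite list of pairs (a Sweedler representative) and two
   representatives are identified exactly when they are identified in the
   tensor product, i.e. via the universal property: every bilinear map into
   every K-vector space takes the same value on them. Likewise for A(x)A(x)A. *)
From HB Require Import structures.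
From mathcomp Require Import all_boot all_order all_algebra.
Set Implicit Arguments. Unset Strict Implicit. Unset Printing Implicit Defensive.
Import GRing.Theory.
Local Open Scope ring_scope.

Section Hopf.
Variables (K : fieldType) (A : algType K).

Definition bilin (V : lmodType K) (f : A -> A -> V) : Prop :=
  (forall (k : K) x x' y, f (k *: x + x') y = k *: f x y + f x' y) /\
  (forall (k : K) x y y', f x (k *: y + y') = k *: f x y + f x y').

Definition trilin (V : lmodType K) (f : A -> A -> A -> V) : Prop :=
  (forall (k : K) x x' y z, f (k *: x + x') y z = k *: f x y z + f x' y z) /\
  (forall (k : K) x y y' z, f x (k *: y + y') z = k *: f x y z + f x y' z) /\
  (forall (k : K) x y z z', f x y (k *: z + z') = k *: f x y z + f x y z').

Definition teq2 (s t : seq (A * A)) : Prop :=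
  forall (V : lmodType K) (f : A -> A -> V), bilin f ->
    \sum_(p <- s) f p.1 p.2 = \sum_(p <- t) f p.1 p.2.

Definition teq3 (s t : seq (A * A * A)) : Prop :=
  forall (V : lmodType K) (f : A -> A -> A -> V), trilin f ->
    \sum_(p <- s) f p.1.1 p.1.2 p.2 = \sum_(p <- t) f p.1.1 p.1.2 p.2.

Definition is_hopf (Delta : A -> seq (A * A)) (eps : A -> K) (S : A -> A) : Prop :=
  (forall (k : K) a b,
     teq2 (Delta (k *: a + b)) ([seq (k *: p.1, p.2) | p <- Delta a] ++ Delta b)) /\
  (forall a, teq3 [seq (p.1, q.1, q.2) | p <- Delta a, q <- Delta p.2]
                  [seq (q.1, q.2, p.2) | p <- Delta a, q <- Delta p.1]) /\
  (forall (k : K) a b, eps (k *: a + b) = k * eps a + eps b) /\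
  (forall a, \sum_(p <- Delta a) eps p.1 *: p.2 = a) /\
  (forall a, \sum_(p <- Delta a) eps p.2 *: p.1 = a) /\
  (forall a b, teq2 (Delta (a * b))
                    [seq (p.1 * q.1, p.2 * q.2) | p <- Delta a, q <- Delta b]) /\
  teq2 (Delta 1) [:: (1, 1)] /\
  (forall a b, eps (a * b) = eps a * eps b) /\
  eps 1 = 1 /\
  (forall (k : K) a b, S (k *: a + b) = k *: S a + S b) /\
  (forall a, \sum_(p <- Delta a) S p.1 * p.2 = eps a *: 1) /\
  (forall a, \sum_(p <- Delta a) p.1 * S p.2 = eps a *: 1).

Definition cocommutative (Delta : A -> seq (A * A)) : Prop :=
  forall a, teq2 (Delta a) [seq (p.2, p.1) | p <- Delta a].

Definition is_subalg (P : A -> Prop) : Prop :=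
  P 0 /\ (forall (k : K) x y, P x -> P y -> P (k *: x + y)) /\
  P 1 /\ (forall x y, P x -> P y -> P (x * y)).

Definition is_hopf_sub (Delta : A -> seq (A * A)) (S : A -> A) (D : A -> Prop) : Prop :=
  is_subalg D /\
  (forall d, D d -> exists s : seq (A * A),
       (forall p, p \in s -> D p.1 /\ D p.2) /\ teq2 (Delta d) s) /\
  (forall d, D d -> D (S d)).

Definition is_normal_hopf_sub (Delta : A -> seq (A * A)) (S : A -> A) (D : A -> Prop) : Prop :=
  is_hopf_sub Delta S D /\
  (forall a d, D d -> D (\sum_(p <- Delta a) p.1 * d * S p.2)).

Definition hbr (Delta : A -> seq (A * A)) (S : A -> A) (a b : A) : A :=
  \sum_(p <- Delta a) \sum_(q <- Delta b) p.1 * q.1 * S p.2 * S q.2.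

Definition gen_subalg (G : A -> Prop) : A -> Prop :=
  fun x => forall P, is_subalg P -> (forall g, G g -> P g) -> P x.

Definition hcomm (Delta : A -> seq (A * A)) (S : A -> A) (X Y : A -> Prop) : A -> Prop :=
  gen_subalg (fun g => exists a b, X a /\ Y b /\ g = hbr Delta S a b).

End Hopf.

(* Main.v *)
From HB Require Import structures.
Require Import Defs.
From mathcomp Require Import all_boot all_order all_algebra.
Set Implicit Arguments. Unset Strict Implicit. Unset Printing Implicit Defensive.
Import GRing.Theory.
Local Open Scope ring_scope.

Section Fw.
Variables (K : fieldType) (A : algType K).

Definition lin (V : lmodType K) (g : A -> V) :=
  forall (k : K) x y, g (k *: x + y) = k *: g x + g y.

Section LinV.
Variables (V : lmodType K) (g : A -> V) (Hg : lin g).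
Lemma lin0 : g 0 = 0.
Proof.
have H := Hg 1 0 0; rewrite addr0 scaler0 scale1r in H.
by apply: (@addrI _ (g 0)); rewrite addr0 -H.
Qed.
Lemma linZ k x : g (k *: x) = k *: g x.
Proof. by rewrite -[k *: x]addr0 Hg lin0 addr0. Qed.
Lemma linD x y : g (x + y) = g x + g y.
Proof. by have := Hg 1 x y; rewrite !scale1r. Qed.
Lemma lin_sum (I : Type) (s : seq I) (F : I -> A) :
  g (\sum_(i <- s) F i) = \sum_(i <- s) g (F i).
Proof.
elim: s => [|i s IH]; first by rewrite !big_nil lin0.
by rewrite !big_cons linD IH.
Qed.
End LinV.

Definition bil (V : lmodType K) (F : A -> A -> V) :=
  (forall y, lin (fun x => F x y)) /\ (forall x, lin (F x)).
Definition tril (V : lmodType K) (F : A -> A -> A -> V) :=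
  [/\ (forall y z, lin (fun x => F x y z)), (forall x z, lin (fun y => F x y z))
    & (forall x y, lin (F x y))].
Definition quadl (V : lmodType K) (F : A -> A -> A -> A -> V) :=
  [/\ (forall y z w, lin (fun x => F x y z w)), (forall x z w, lin (fun y => F x y z w)),
      (forall x y w, lin (fun z => F x y z w)) & (forall x y z, lin (F x y z))].

Lemma bilZl (V : lmodType K) (F : A -> A -> V) k x y : bil F -> F (k *: x) y = k *: F x y.
Proof. by case=> H1 _; rewrite (linZ (H1 y)). Qed.
Lemma bilZr (V : lmodType K) (F : A -> A -> V) k x y : bil F -> F x (k *: y) = k *: F x y.
Proof. by case=> _ H2; rewrite (linZ (H2 x)). Qed.

Lemma bilE (V : lmodType K) (F : A -> A -> V) : bil F -> bilin F.
Proof. by case=> H1 H2; split=> *; [apply: H1 | apply: H2]. Qed.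
Lemma trilE (V : lmodType K) (F : A -> A -> A -> V) : tril F -> trilin F.
Proof. by case=> H1 H2 H3; split; [|split] => *; [apply: H1 | apply: H2 | apply: H3]. Qed.

Lemma lin_id : lin (fun x : A => x). Proof. by []. Qed.
Lemma lin_comp (V : lmodType K) (h : A -> V) (g : A -> A) :
  lin h -> lin g -> lin (fun x => h (g x)).
Proof. by move=> Hh Hg k x y; rewrite Hg Hh. Qed.
Lemma lin_mull (c : A) : lin (fun x => c * x).
Proof. by move=> k x y; rewrite mulrDr scalerAr. Qed.
Lemma lin_mulr (c : A) : lin (fun x => x * c).
Proof. by move=> k x y; rewrite mulrDl scalerAl. Qed.
Lemma lin_scale (V : lmodType K) (k0 : K) (g : A -> V) : lin g -> lin (fun x => k0 *: g x).
Proof. by move=> Hg k x y; rewrite Hg scalerDr !scalerA mulrC. Qed.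
Lemma lin_add (V : lmodType K) (g h : A -> V) : lin g -> lin h -> lin (fun x => g x + h x).
Proof.
move=> Hg Hh k x y; rewrite Hg Hh scalerDr.
by rewrite -!addrA; congr (_ + _); rewrite addrCA.
Qed.
Lemma lin_sumf (V : lmodType K) (I : Type) (s : seq I) (G : A -> I -> V) :
  (forall i, lin (fun x => G x i)) -> lin (fun x => \sum_(i <- s) G x i).
Proof.
move=> HG k x y; rewrite scaler_sumr -big_split /=.
by apply: eq_bigr => i _; rewrite HG.
Qed.

Variables (Delta : A -> seq (A * A)) (eps : A -> K) (S : A -> A).

Definition dsum (V : lmodType K) (a : A) (F : A -> A -> V) : V :=
  \sum_(p <- Delta a) F p.1 p.2.

Lemma lin_dsumF (V : lmodType K) (a : A) (F : A -> A -> A -> V) :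
  (forall u v, lin (fun x => F x u v)) -> lin (fun x => dsum a (F x)).
Proof. by move=> H; apply: lin_sumf => p; apply: H. Qed.

Hypothesis HDl : forall (k : K) a b,
     teq2 (Delta (k *: a + b)) ([seq (k *: p.1, p.2) | p <- Delta a] ++ Delta b).
Hypothesis Hel : forall (k : K) a b, eps (k *: a + b) = k * eps a + eps b.
Hypothesis HSl : forall (k : K) a b, S (k *: a + b) = k *: S a + S b.

Lemma lin_S : lin S. Proof. exact: HSl. Qed.

Lemma lin_dsumA (V : lmodType K) (F : A -> A -> V) : bil F -> lin (fun a => dsum a F).
Proof.
move=> HF k a b; rewrite /dsum (HDl k a b (bilE HF)) big_cat big_map /=.
rewrite scaler_sumr; congr (_ + _); apply: eq_bigr => p _.
by rewrite (linZ (HF.1 _)).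
Qed.

Lemma lin_eps (V : lmodType K) (g : A -> A) (v : V) : lin g -> lin (fun x => eps (g x) *: v).
Proof. by move=> Hg k x y; rewrite Hg Hel scalerDl scalerA. Qed.

End Fw.

Ltac closed t := let _ := type of t in idtac.

Ltac slin_base :=
  first [ apply: lin_S; assumption
        | apply: lin_mull | apply: lin_mulr
        | match goal with H : _ |- _ => apply: H end ].

Ltac slin :=
  cbv beta;
  first [ solve [slin_base] |
  match goal with
  | |- lin (fun x => x) => apply: lin_id
  | |- lin (fun x => dsum ?D ?a _) => let _ := type of D in let _ := type of a in apply: lin_dsumF => ? ?; slin
  | |- lin (fun x => \sum_(i <- ?s) _) => let _ := type of s in apply: lin_sumf => ?; slin
  | |- lin (fun x => _ + _) => apply: lin_add; slin
  | |- lin (fun x => ?k *: _) => let _ := type of k in apply: lin_scale; slin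
  | |- lin (fun x => ?e (@?g x) *: ?v) => let _ := type of e in let _ := type of v in
        apply: (@lin_eps _ _ e _ _ g v); side
  | |- lin (fun x => dsum ?D (@?g x) ?F) => let _ := type of D in let _ := type of F in
        apply: (@lin_comp _ _ _ (fun y => dsum D y F) g);
        [apply: lin_dsumA; side | slin]
  | |- lin (fun x => ?h (@?g x)) => let _ := type of h in
        apply: (@lin_comp _ _ _ h g); [slin_base | slin]
  | |- lin (fun x => ?h (@?g x) ?c) => let _ := type of h in let _ := type of c in
        apply: (@lin_comp _ _ _ (fun y => h y c) g); [slin_base | slin]
  | |- lin (fun x => ?h (@?g x) ?c ?d) => let _ := type of h in let _ := type of c in let _ := type of d in
        apply: (@lin_comp _ _ _ (fun y => h y c d) g); [slin_base | slin]
  | |- lin (fun x => ?h (@?g x) ?c ?d ?e) => let _ := type of h in let _ := type of c in let _ := type of d in let _ := type of e in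
        apply: (@lin_comp _ _ _ (fun y => h y c d e) g); [slin_base | slin]
  end ]
with side := first [assumption | sbil | slin]
with sbil :=
  lazymatch goal with
  | |- bil _ => split => ?; slin
  | |- tril _ => split => ? ?; slin
  | |- quadl _ => split => ? ? ?; slin
  | |- bilin _ => apply: bilE; sbil
  | |- trilin _ => apply: trilE; sbil
  end.


Section Hopf.
Variables (K : fieldType) (A : algType K).
Variables (Delta : A -> seq (A * A)) (eps : A -> K) (S : A -> A).
Hypothesis HDl : forall (k : K) a b,
     teq2 (Delta (k *: a + b)) ([seq (k *: p.1, p.2) | p <- Delta a] ++ Delta b).
Hypothesis Hco : forall a, teq3 [seq (p.1, q.1, q.2) | p <- Delta a, q <- Delta p.2]
                  [seq (q.1, q.2, p.2) | p <- Delta a, q <- Delta p.1].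
Hypothesis Hel : forall (k : K) a b, eps (k *: a + b) = k * eps a + eps b.
Hypothesis Hcl : forall a, \sum_(p <- Delta a) eps p.1 *: p.2 = a.
Hypothesis Hcr : forall a, \sum_(p <- Delta a) eps p.2 *: p.1 = a.
Hypothesis Hdm : forall a b, teq2 (Delta (a * b))
                    [seq (p.1 * q.1, p.2 * q.2) | p <- Delta a, q <- Delta b].
Hypothesis Hd1 : teq2 (Delta 1) [:: (1, 1)].
Hypothesis Hem : forall a b, eps (a * b) = eps a * eps b.
Hypothesis He1 : eps 1 = 1.
Hypothesis HSl : forall (k : K) a b, S (k *: a + b) = k *: S a + S b.
Hypothesis HSa : forall a, \sum_(p <- Delta a) S p.1 * p.2 = eps a *: 1.
Hypothesis HSb : forall a, \sum_(p <- Delta a) p.1 * S p.2 = eps a *: 1.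
Hypothesis Hcc : cocommutative Delta.

Local Notation D := (dsum Delta).

Lemma eq_dsum (V : lmodType K) a (F G : A -> A -> V) :
  (forall x y, F x y = G x y) -> D a F = D a G.
Proof. by move=> H; apply: eq_bigr => p _; apply: H. Qed.

Lemma dsum_pull (V : lmodType K) a (F : A -> A -> A) (h : A -> V) :
  lin h -> D a (fun x y => h (F x y)) = h (D a F).
Proof. by move=> Hh; rewrite /dsum (lin_sum Hh). Qed.

Lemma dsum_exch (V : lmodType K) a b (F : A -> A -> A -> A -> V) :
  D a (fun x y => D b (fun u v => F x y u v)) = D b (fun u v => D a (fun x y => F x y u v)).
Proof. by rewrite /dsum; apply: exchange_big. Qed.

Lemma dsum_scale (V : lmodType K) a (k : K) (F : A -> A -> V) :
  D a (fun x y => k *: F x y) = k *: D a F.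
Proof. by rewrite /dsum scaler_sumr. Qed.

Lemma dsum_co (V : lmodType K) a (G : A -> A -> A -> V) : tril G ->
  D a (fun x y => D y (fun u v => G x u v)) = D a (fun x y => D x (fun u v => G u v y)).
Proof.
move=> HG; have := Hco a (trilE HG); rewrite !big_allpairs_dep /=.
by rewrite /dsum.
Qed.

Lemma dsum_cc (V : lmodType K) a (F : A -> A -> V) : bil F ->
  D a F = D a (fun x y => F y x).
Proof. by move=> HF; have := Hcc a (bilE HF); rewrite big_map. Qed.

Lemma dsum_cl (V : lmodType K) a (g : A -> V) : lin g ->
  D a (fun x y => eps x *: g y) = g a.
Proof.
move=> Hg; rewrite /dsum; under eq_bigr do rewrite -(linZ Hg).
by rewrite -(lin_sum Hg) Hcl.
Qed.

Lemma dsum_cr (V : lmodType K) a (g : A -> V) : lin g ->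
  D a (fun x y => eps y *: g x) = g a.
Proof.
move=> Hg; rewrite /dsum; under eq_bigr do rewrite -(linZ Hg).
by rewrite -(lin_sum Hg) Hcr.
Qed.

Lemma dsum_mul (V : lmodType K) a b (F : A -> A -> V) : bil F ->
  D (a * b) F = D a (fun x y => D b (fun u v => F (x * u) (y * v))).
Proof. by move=> HF; rewrite /dsum (Hdm a b (bilE HF)) big_allpairs_dep. Qed.

Lemma dsum_one (V : lmodType K) (F : A -> A -> V) : bil F -> D 1 F = F 1 1.
Proof. by move=> HF; rewrite /dsum (Hd1 (bilE HF)) big_seq1. Qed.

Lemma dsum_Sl a : D a (fun x y => S x * y) = eps a *: 1. Proof. exact: HSa. Qed.
Lemma dsum_Sr a : D a (fun x y => x * S y) = eps a *: 1. Proof. exact: HSb. Qed.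

Lemma dsum_teq (V : lmodType K) a s (F : A -> A -> V) : teq2 (Delta a) s -> bil F ->
  D a F = \sum_(p <- s) F p.1 p.2.
Proof. by move=> Hs HF; rewrite /dsum (Hs _ _ (bilE HF)). Qed.

Lemma S0 : S 0 = 0. Proof. exact: (lin0 (lin_S HSl)). Qed.

Lemma S1 : S 1 = 1.
Proof.
have := dsum_Sl 1; rewrite dsum_one; last by sbil.
by rewrite mulr1 He1 scale1r.
Qed.

Section T34.
Variable V : lmodType K.

Lemma T3_sw23 a (G : A -> A -> A -> V) : tril G ->
  D a (fun x y => D y (fun u v => G x u v)) = D a (fun x y => D y (fun u v => G x v u)).
Proof. case=> G1 G2 G3; apply: eq_dsum => x y; apply: dsum_cc; sbil. Qed.

Lemma T3_sw12 a (G : A -> A -> A -> V) : tril G ->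
  D a (fun x y => D y (fun u v => G x u v)) = D a (fun x y => D y (fun u v => G u x v)).
Proof.
case=> G1 G2 G3; rewrite dsum_co; last by sbil.
rewrite (@dsum_co _ _ (fun x u v => G u x v)); last by sbil.
apply: eq_dsum => x y; apply: dsum_cc; sbil.
Qed.

Lemma T4_sw34 a (G : A -> A -> A -> A -> V) : quadl G ->
  D a (fun x y => D y (fun u v => D v (fun s t => G x u s t))) =
  D a (fun x y => D y (fun u v => D v (fun s t => G x u t s))).
Proof.
case=> G1 G2 G3 G4; apply: eq_dsum => x y; apply: eq_dsum => u v.
apply: dsum_cc; sbil.
Qed.

Lemma T4_sw23 a (G : A -> A -> A -> A -> V) : quadl G ->
  D a (fun x y => D y (fun u v => D v (fun s t => G x u s t))) =
  D a (fun x y => D y (fun u v => D v (fun s t => G x s u t))).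
Proof.
case=> G1 G2 G3 G4; apply: eq_dsum => x y.
apply: (@T3_sw12 _ (fun u s t => G x u s t)); sbil.
Qed.

Lemma T4_sw12 a (G : A -> A -> A -> A -> V) : quadl G ->
  D a (fun x y => D y (fun u v => D v (fun s t => G x u s t))) =
  D a (fun x y => D y (fun u v => D v (fun s t => G u x s t))).
Proof.
case=> G1 G2 G3 G4.
apply: (@T3_sw12 _ (fun x u v => D v (fun s t => G x u s t))); sbil.
Qed.

Lemma T4_bal a (G : A -> A -> A -> A -> V) : quadl G ->
  D a (fun x y => D x (fun p q => D y (fun r s => G p q r s))) =
  D a (fun x y => D y (fun u v => D v (fun s t => G x u s t))).
Proof.
case=> G1 G2 G3 G4.
rewrite -(@dsum_co _ _ (fun p q y => D y (fun r s => G p q r s))) //; sbil.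
Qed.

Lemma T4_left a (G : A -> A -> A -> A -> V) : quadl G ->
  D a (fun x y => D x (fun p q => D p (fun r s => G r s q y))) =
  D a (fun x y => D y (fun u v => D v (fun s t => G x u s t))).
Proof.
move=> HG; have [G1 G2 G3 G4] := HG.
rewrite -T4_bal //.
rewrite -(@dsum_co _ _ (fun x u v => D x (fun r s => G r s u v))); last by sbil.
apply: eq_dsum => x y; exact: dsum_exch.
Qed.

Lemma K3_23S a (H : A -> A -> V) : bil H ->
  D a (fun x y => D y (fun u v => H x (S u * v))) = H a 1.
Proof.
case=> H1 H2.
transitivity (D a (fun x y => eps y *: H x 1)); last by apply: dsum_cr; slin.
apply: eq_dsum => x y.
rewrite (@dsum_pull _ _ (fun u v => S u * v) (H x)); last by slin.
by rewrite dsum_Sl (linZ (H2 _)).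
Qed.

Lemma K3_23S' a (H : A -> A -> V) : bil H ->
  D a (fun x y => D y (fun u v => H x (u * S v))) = H a 1.
Proof.
case=> H1 H2.
transitivity (D a (fun x y => eps y *: H x 1)); last by apply: dsum_cr; slin.
apply: eq_dsum => x y.
rewrite (@dsum_pull _ _ (fun u v => u * S v) (H x)); last by slin.
by rewrite dsum_Sr (linZ (H2 _)).
Qed.

Lemma K3_12S a (H : A -> A -> V) : bil H ->
  D a (fun x y => D y (fun u v => H (S x * u) v)) = H 1 a.
Proof.
case=> H1 H2.
rewrite (@dsum_co _ _ (fun x u v => H (S x * u) v)); last by sbil.
transitivity (D a (fun x y => eps x *: H 1 y)); last by apply: dsum_cl; slin.
apply: eq_dsum => x y.
rewrite (@dsum_pull _ _ (fun u v => S u * v) (fun m => H m y)); last by slin.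
by rewrite dsum_Sl (linZ (H1 _)).
Qed.

Lemma K3_12S' a (H : A -> A -> V) : bil H ->
  D a (fun x y => D y (fun u v => H (x * S u) v)) = H 1 a.
Proof.
case=> H1 H2.
rewrite (@dsum_co _ _ (fun x u v => H (x * S u) v)); last by sbil.
transitivity (D a (fun x y => eps x *: H 1 y)); last by apply: dsum_cl; slin.
apply: eq_dsum => x y.
rewrite (@dsum_pull _ _ (fun u v => u * S v) (fun m => H m y)); last by slin.
by rewrite dsum_Sr (linZ (H1 _)).
Qed.

Lemma K4_12S a (H : A -> A -> A -> V) : tril H ->
  D a (fun x y => D y (fun u v => D v (fun s t => H (S x * u) s t))) =
  D a (fun r s => H 1 r s).
Proof.
case=> H1 H2 H3.
rewrite -(@T4_bal _ (fun x u s t => H (S x * u) s t)); last by sbil.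
transitivity (D a (fun x y => eps x *: D y (fun r s => H 1 r s))).
  apply: eq_dsum => x y.
  rewrite (@dsum_pull _ _ (fun u v => S u * v) (fun m => D y (fun r s => H m r s))); last by slin.
  rewrite dsum_Sl (linZ (g := fun m => D y (fun r s => H m r s))) //; slin.
by apply: (@dsum_cl _ _ (fun y => D y (fun r s => H 1 r s))); slin.
Qed.

Lemma K4_12S' a (H : A -> A -> A -> V) : tril H ->
  D a (fun x y => D y (fun u v => D v (fun s t => H (x * S u) s t))) =
  D a (fun r s => H 1 r s).
Proof.
case=> H1 H2 H3.
rewrite -(@T4_bal _ (fun x u s t => H (x * S u) s t)); last by sbil.
transitivity (D a (fun x y => eps x *: D y (fun r s => H 1 r s))).
  apply: eq_dsum => x y.
  rewrite (@dsum_pull _ _ (fun u v => u * S v) (fun m => D y (fun r s => H m r s))); last by slin.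
  rewrite dsum_Sr (linZ (g := fun m => D y (fun r s => H m r s))) //; slin.
by apply: (@dsum_cl _ _ (fun y => D y (fun r s => H 1 r s))); slin.
Qed.

Lemma K4_23S a (H : A -> A -> A -> V) : tril H ->
  D a (fun x y => D y (fun u v => D v (fun s t => H x (S u * s) t))) =
  D a (fun p s => H p 1 s).
Proof.
case=> H1 H2 H3; apply: eq_dsum => x y.
by apply: (@K3_12S _ (fun m t => H x m t)); sbil.
Qed.

Lemma K4_23S' a (H : A -> A -> A -> V) : tril H ->
  D a (fun x y => D y (fun u v => D v (fun s t => H x (u * S s) t))) =
  D a (fun p s => H p 1 s).
Proof.
case=> H1 H2 H3; apply: eq_dsum => x y.
by apply: (@K3_12S' _ (fun m t => H x m t)); sbil.
Qed.

End T34.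

Lemma SM x y : S (x * y) = S y * S x.
Proof.
have E1 : D x (fun x1 x' => D x' (fun x2 x3 => D y (fun y1 y' => D y' (fun y2 y3 =>
            S (x1 * y1) * (x2 * y2) * (S y3 * S x3))))) = S (x * y).
  transitivity (D x (fun x1 x' => D x' (fun x2 x3 =>
      D y (fun y1 y' => D y' (fun y2 y3 => (fun p m => S (x1 * p) * x2 * m * S x3) y1 (y2 * S y3)))))).
    by apply: eq_dsum => x1 x'; apply: eq_dsum => x2 x3; apply: eq_dsum => y1 y';
       apply: eq_dsum => y2 y3; rewrite !mulrA.
  transitivity (D x (fun x1 x' => D x' (fun u v => (fun p m => S (p * y) * m) x1 (u * S v)))).
    apply: eq_dsum => x1 x'; apply: eq_dsum => x2 x3.
    by rewrite (@K3_23S' _ y (fun p m => S (x1 * p) * x2 * m * S x3)) /= ?mulr1 ?mulrA //; sbil.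
  by rewrite (@K3_23S' _ x (fun p m => S (p * y) * m)) /= ?mulr1 //; sbil.
rewrite -E1.
rewrite (@dsum_co _ x (fun x1 x2 x3 => D y (fun y1 y' => D y' (fun y2 y3 =>
            S (x1 * y1) * (x2 * y2) * (S y3 * S x3))))); last by sbil.
transitivity (D x (fun p x3 => D y (fun q y3 => (eps p * eps q) *: (S y3 * S x3)))); last first.
  transitivity (D x (fun p x3 => eps p *: (S y * S x3))); last by apply: dsum_cl; slin.
  apply: eq_dsum => p x3; rewrite -(@dsum_cl _ y (fun y3 => S y3 * S x3)); last by slin. rewrite -dsum_scale.
  by apply: eq_dsum => q y3; rewrite scalerA.
apply: eq_dsum => p x3.
transitivity (D p (fun x1 x2 => D y (fun q y3 => D q (fun y1 y2 => S (x1 * y1) * (x2 * y2) * (S y3 * S x3))))).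
  apply: eq_dsum => x1 x2.
  apply: (@dsum_co _ y (fun y1 y2 y3 => S (x1 * y1) * (x2 * y2) * (S y3 * S x3))); sbil.
rewrite dsum_exch; apply: eq_dsum => q y3.
rewrite -(@dsum_mul _ p q (fun m n => S m * n * (S y3 * S x3))); last by sbil.
rewrite (@dsum_pull _ _ (fun m n => S m * n) (fun z => z * (S y3 * S x3))); last by slin.
by rewrite dsum_Sl Hem -scalerAl mul1r.
Qed.


Lemma SS x : S (S x) = x.
Proof.
transitivity (D x (fun a y => D y (fun b c => (fun p m => S (S p) * m) a (S b * c)))).
  by rewrite (@K3_23S _ x (fun p m => S (S p) * m)) /= ?mulr1 //; sbil.
transitivity (D x (fun a y => D y (fun b c => (fun a u v => S (u * S a) * v) a b c))).
  by apply: eq_dsum => a y; apply: eq_dsum => b c /=; rewrite SM mulrA.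
rewrite (@T3_sw12 _ x (fun a u v => S (u * S a) * v)); last by sbil.
by rewrite (@K3_12S' _ x (fun m v => S m * v)) /= ?S1 ?mul1r //; sbil.
Qed.

Lemma SD (V : lmodType K) a (f : A -> A -> V) : bil f ->
  D (S a) f = D a (fun x y => f (S x) (S y)).
Proof.
move=> Hf; have [f1 f2] := Hf.
have E1 : D a (fun a1 y => D y (fun a2 w => D w (fun a3 a4 => D (S a1) (fun p q =>
             D a2 (fun r s => f (p * (r * S a3)) (q * (s * S a4))))))) =
          D a (fun r s => f (S r) (S s)).
  transitivity (D a (fun a1 y => D y (fun a2 w => D w (fun a3 a4 =>
     (fun m b3 b4 => D m (fun m1 n1 => f (m1 * S b3) (n1 * S b4))) (S a1 * a2) a3 a4)))).
    apply: eq_dsum => a1 y; apply: eq_dsum => a2 w; apply: eq_dsum => a3 a4 /=.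
    rewrite (@dsum_mul _ (S a1) a2 (fun m1 n1 => f (m1 * S a3) (n1 * S a4))); last by sbil.
    by apply: eq_dsum => p q; apply: eq_dsum => r s; rewrite !mulrA.
  rewrite (@K4_12S _ a (fun m b3 b4 => D m (fun m1 n1 => f (m1 * S b3) (n1 * S b4)))); last by sbil.
  by apply: eq_dsum => r s /=; rewrite dsum_one ?mul1r //; sbil.
rewrite -E1.
transitivity (D a (fun a1 y => D (S a1) (fun p q => D y (fun a2 w => D w (fun a3 a4 =>
             D a2 (fun r s => f (p * (r * S a3)) (q * (s * S a4)))))))); last first.
  apply: eq_dsum => a1 y; rewrite [LHS]dsum_exch; apply: eq_dsum => a2 w; exact: dsum_exch.
symmetry.
transitivity (D a (fun a1 y => eps y *: D (S a1) f)); last by apply: (@dsum_cr _ a (fun z => D (S z) f)); slin.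
apply: eq_dsum => a1 y; rewrite -dsum_scale; apply: eq_dsum => p q.
transitivity (D y (fun a2 w => D a2 (fun r s => D w (fun a3 a4 => f (p * (r * S a3)) (q * (s * S a4)))))).
  apply: eq_dsum => a2 w; exact: dsum_exch.
rewrite (@T4_bal _ y (fun r s a3 a4 => f (p * (r * S a3)) (q * (s * S a4)))); last by sbil.
rewrite (@T4_sw23 _ y (fun r s a3 a4 => f (p * (r * S a3)) (q * (s * S a4)))); last by sbil.
rewrite -(@T4_bal _ y (fun r s a3 a4 => f (p * (r * S s)) (q * (a3 * S a4)))); last by sbil.
transitivity (D y (fun x w => eps x *: (eps w *: f p q))); last first.
  by rewrite (@dsum_cl _ y (fun w => eps w *: f p q)) //; slin.
apply: eq_dsum => x w.
rewrite (@dsum_pull _ _ (fun p' q' => p' * S q') (fun m => D w (fun r s => f (p * m) (q * (r * S s))))); last by slin.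
rewrite dsum_Sr /=.
rewrite (@dsum_pull _ _ (fun r s => r * S s) (fun m => f (p * (eps x *: 1)) (q * m))); last by slin.
by rewrite dsum_Sr -!scalerAr !mulr1 bilZl // bilZr.
Qed.


Local Notation ad b z := (D b (fun p q => p * z * S q)).
Local Notation hb x y := (D x (fun p q => D y (fun r s => p * r * S q * S s))).

Lemma P1 a x y : ad a (x * y) = D a (fun u v => ad u x * ad v y).
Proof.
symmetry.
transitivity (D a (fun u v => D u (fun p q => D v (fun r s => p * x * S q * (r * y * S s))))).
  apply: eq_dsum => u v.
  rewrite -(@dsum_pull _ u (fun p q => p * x * S q) (fun z => z * D v (fun r s => r * y * S s))); last by slin.
  apply: eq_dsum => p q.
  by rewrite -(@dsum_pull _ v (fun r s => r * y * S s) (fun z => p * x * S q * z)) //; slin.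
rewrite (@T4_bal _ a (fun p q r s => p * x * S q * (r * y * S s))); last by sbil.
transitivity (D a (fun p y0 => D y0 (fun q v => D v (fun r s =>
                 (fun p m s => p * x * m * y * S s) p (S q * r) s)))).
  by apply: eq_dsum => p y0; apply: eq_dsum => q v; apply: eq_dsum => r s; rewrite /= !mulrA.
rewrite (@K4_23S _ a (fun p m s => p * x * m * y * S s)); last by sbil.
by apply: eq_dsum => p s; rewrite mulr1 !mulrA.
Qed.

Lemma P2 a x : ad a (S x) = S (ad a x).
Proof.
rewrite -(@dsum_pull _ a (fun p q => p * x * S q) S); last by slin.
transitivity (D a (fun p q => (fun p q => q * S x * S p) q p)); first by [].
rewrite -(@dsum_cc _ a (fun p q => q * S x * S p)); last by sbil.
by apply: eq_dsum => p q; rewrite !SM SS mulrA.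
Qed.

Lemma P4 (V : lmodType K) a x (f : A -> A -> V) : bil f ->
  D (ad a x) f = D a (fun u v => D x (fun p q => f (ad u p) (ad v q))).
Proof.
move=> Hf; have [f1 f2] := Hf.
rewrite -(@dsum_pull _ a (fun s t => s * x * S t) (fun z => D z f)); last by slin.
transitivity (D x (fun p q => D a (fun s t => D s (fun s1 s2 => D t (fun t1 t2 =>
               f (s1 * p * S t1) (s2 * q * S t2)))))).
  rewrite -dsum_exch; apply: eq_dsum => s t.
  rewrite (@dsum_mul _ (s * x) (S t) f); last by sbil.
  rewrite (@dsum_mul _ s x (fun m n => D (S t) (fun t1 t2 => f (m * t1) (n * t2)))); last by sbil.
  rewrite dsum_exch; apply: eq_dsum => p q; apply: eq_dsum => s1 s2.
  by apply: (@SD _ t (fun t1 t2 => f (s1 * p * t1) (s2 * q * t2))); sbil.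
transitivity (D x (fun p q => D a (fun u v => D u (fun u1 u2 => D v (fun v1 v2 =>
               f (u1 * p * S u2) (v1 * q * S v2)))))); last first.
  rewrite [RHS]dsum_exch; apply: eq_dsum => p q; apply: eq_dsum => u v.
  rewrite -(@dsum_pull _ u (fun u1 u2 => u1 * p * S u2) (fun z => f z (ad v q))); last by slin.
  apply: eq_dsum => u1 u2.
  by rewrite -(@dsum_pull _ v (fun v1 v2 => v1 * q * S v2) (fun z => f (u1 * p * S u2) z)) //; slin.
apply: eq_dsum => p q.
rewrite (@T4_bal _ a (fun s1 s2 t1 t2 => f (s1 * p * S t1) (s2 * q * S t2))); last by sbil.
rewrite (@T4_sw23 _ a (fun s1 s2 t1 t2 => f (s1 * p * S t1) (s2 * q * S t2))); last by sbil.
by rewrite -(@T4_bal _ a (fun u1 u2 v1 v2 => f (u1 * p * S u2) (v1 * q * S v2))) //; sbil.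
Qed.


Lemma Gad a x y : ad a (hb x y) = D a (fun u v => hb (ad u x) (ad v y)).
Proof.
transitivity (D x (fun x1 x2 => D y (fun y1 y2 => D a (fun w1 w' => D w' (fun w2 w'' =>
    D w'' (fun w3 w4 => ad w1 x1 * ad w2 y1 * S (ad w3 x2) * S (ad w4 y2))))))).
  rewrite -(@dsum_pull _ x (fun x1 x2 => D y (fun y1 y2 => x1 * y1 * S x2 * S y2)) (fun z => ad a z)); last by slin.
  apply: eq_dsum => x1 x2.
  rewrite -(@dsum_pull _ y (fun y1 y2 => x1 * y1 * S x2 * S y2) (fun z => ad a z)); last by slin.
  apply: eq_dsum => y1 y2 /=.
  rewrite -(@T4_left _ a (fun w1 w2 w3 w4 => ad w1 x1 * ad w2 y1 * S (ad w3 x2) * S (ad w4 y2))); last by sbil.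
  rewrite P1; apply: eq_dsum => u v; rewrite P1.
  rewrite -(@dsum_pull _ u (fun u1 u2 => ad u1 (x1 * y1) * ad u2 (S x2)) (fun z => z * ad v (S y2))); last by slin.
  apply: eq_dsum => u1 u2; rewrite P1.
  rewrite -(@dsum_pull _ u1 (fun w1 w2 => ad w1 x1 * ad w2 y1) (fun z => z * ad u2 (S x2) * ad v (S y2))); last by slin.
  by apply: eq_dsum => w1 w2; rewrite !P2.
transitivity (D a (fun u v => D u (fun u1 u2 => D x (fun x1 x2 => D v (fun v1 v2 => D y (fun y1 y2 =>
      ad u1 x1 * ad v1 y1 * S (ad u2 x2) * S (ad v2 y2))))))); last first.
  apply: eq_dsum => u v.
  rewrite [RHS](@P4 _ u x (fun p1 p2 => D (ad v y) (fun q1 q2 => p1 * q1 * S p2 * S q2))); last by sbil.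
  apply: eq_dsum => u1 u2; apply: eq_dsum => x1 x2.
  by rewrite [RHS](@P4 _ v y (fun q1 q2 => ad u1 x1 * q1 * S (ad u2 x2) * S q2)) //; sbil.
transitivity (D x (fun x1 x2 => D y (fun y1 y2 => D a (fun u v => D u (fun u1 u2 => D v (fun v1 v2 =>
      ad u1 x1 * ad v1 y1 * S (ad u2 x2) * S (ad v2 y2))))))).
  apply: eq_dsum => x1 x2; apply: eq_dsum => y1 y2.
  rewrite (@T4_sw23 _ a (fun w1 w2 w3 w4 => ad w1 x1 * ad w2 y1 * S (ad w3 x2) * S (ad w4 y2))); last by sbil.
  by symmetry; apply: (@T4_bal _ a (fun u1 u2 v1 v2 => ad u1 x1 * ad v1 y1 * S (ad u2 x2) * S (ad v2 y2))); sbil.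
under eq_dsum => x1 x2 do rewrite dsum_exch.
rewrite [LHS]dsum_exch.
under eq_dsum => u v do under eq_dsum => x1 x2 do rewrite dsum_exch.
under eq_dsum => u v do rewrite dsum_exch.
under eq_dsum => u v do under eq_dsum => u1 u2 do under eq_dsum => x1 x2 do rewrite dsum_exch.
by [].
Qed.


Lemma Sgen x y : S (hb x y) = D x (fun x1 x2 => ad x2 (hb (S x1) y)).
Proof.
transitivity (D y (fun y1 y2 => D x (fun x1 x2 => y1 * (x1 * (S y2 * S x2))))).
  rewrite -(@dsum_pull _ x (fun x1 x2 => D y (fun y1 y2 => x1 * y1 * S x2 * S y2)) S); last by slin.
  transitivity (D x (fun x1 x2 => D y (fun y1 y2 => y2 * (x2 * (S y1 * S x1))))).
    apply: eq_dsum => x1 x2.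
    rewrite -(@dsum_pull _ y (fun y1 y2 => x1 * y1 * S x2 * S y2) S); last by slin.
    by apply: eq_dsum => y1 y2; rewrite !SM !SS.
  rewrite (@dsum_cc _ x (fun x1 x2 => D y (fun y1 y2 => y2 * (x2 * (S y1 * S x1))))); last by sbil.
  rewrite dsum_exch.
  by apply: (@dsum_cc _ y (fun y1 y2 => D x (fun x1 x2 => y2 * (x1 * (S y1 * S x2))))); sbil.
symmetry.
transitivity (D x (fun x1 x2 => D x1 (fun p q => D y (fun y1 y2 => D x2 (fun r s =>
                r * (S p * y1 * q * S y2) * S s))))).
  apply: eq_dsum => x1 x2.
  rewrite (@SD _ x1 (fun p q => D y (fun r s => p * r * S q * S s))); last by sbil.
  rewrite -(@dsum_pull _ x1 (fun p q => D y (fun r s => S p * r * S (S q) * S s)) (fun z => ad x2 z)); last by slin.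
  apply: eq_dsum => p q.
  rewrite -(@dsum_pull _ y (fun r s => S p * r * S (S q) * S s) (fun z => ad x2 z)); last by slin.
  by apply: eq_dsum => y1 y2; rewrite SS.
under eq_dsum => x1 x2 do rewrite dsum_exch.
rewrite [LHS]dsum_exch; apply: eq_dsum => y1 y2.
rewrite (@T4_bal _ x (fun p q r s => r * (S p * y1 * q * S y2) * S s)); last by sbil.
transitivity (D x (fun a y0 => D y0 (fun b v => D v (fun c d => a * (S b * y1 * c * S y2) * S d)))).
  rewrite (@T4_sw23 _ x (fun p q r s => r * (S p * y1 * q * S y2) * S s)); last by sbil.
  by apply: (@T4_sw12 _ x (fun a b c d => b * (S a * y1 * c * S y2) * S d)); sbil.
transitivity (D x (fun a y0 => D y0 (fun b v => D v (fun c d =>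
                (fun m c d => m * y1 * c * S y2 * S d) (a * S b) c d)))).
  by apply: eq_dsum => a y0; apply: eq_dsum => b v; apply: eq_dsum => c d; rewrite /= !mulrA.
rewrite (@K4_12S' _ x (fun m c d => m * y1 * c * S y2 * S d)); last by sbil.
by apply: eq_dsum => c d; rewrite mul1r !mulrA.
Qed.


Lemma Dgen (V : lmodType K) a b (f : A -> A -> V) : bil f ->
  D (hb a b) f = D a (fun a1 a2 => D b (fun b1 b2 => f (hb a1 b1) (hb a2 b2))).
Proof.
move=> Hf; have [f1 f2] := Hf.
transitivity (D a (fun p q => D p (fun p1 p2 => D q (fun q1 q2 => D b (fun r s => D r (fun r1 r2 =>
   D s (fun s1 s2 => f (p1 * r1 * S q1 * S s1) (p2 * r2 * S q2 * S s2)))))))).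
  transitivity (D a (fun p q => D b (fun r s => D p (fun p1 p2 => D r (fun r1 r2 =>
   D q (fun q1 q2 => D s (fun s1 s2 => f (p1 * r1 * S q1 * S s1) (p2 * r2 * S q2 * S s2)))))))).
    rewrite -(@dsum_pull _ a (fun p q => D b (fun r s => p * r * S q * S s)) (fun z => D z f)); last by slin.
    apply: eq_dsum => p q.
    rewrite -(@dsum_pull _ b (fun r s => p * r * S q * S s) (fun z => D z f)); last by slin.
    apply: eq_dsum => r s.
    rewrite (@dsum_mul _ (p * r * S q) (S s) f); last by sbil.
    rewrite (@dsum_mul _ (p * r) (S q) (fun m n => D (S s) (fun s1 s2 => f (m * s1) (n * s2)))); last by sbil.
    rewrite (@dsum_mul _ p r (fun m n => D (S q) (fun q1 q2 => D (S s) (fun s1 s2 =>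
               f (m * q1 * s1) (n * q2 * s2))))); last by sbil.
    apply: eq_dsum => p1 p2; apply: eq_dsum => r1 r2.
    rewrite (@SD _ q (fun q1 q2 => D (S s) (fun s1 s2 => f (p1 * r1 * q1 * s1) (p2 * r2 * q2 * s2)))); last by sbil.
    apply: eq_dsum => q1 q2.
    by apply: (@SD _ s (fun s1 s2 => f (p1 * r1 * S q1 * s1) (p2 * r2 * S q2 * s2))); sbil.
  under eq_dsum => p q do rewrite dsum_exch.
  under eq_dsum => p q do under eq_dsum => p1 p2 do under eq_dsum => r s do rewrite dsum_exch.
  under eq_dsum => p q do under eq_dsum => p1 p2 do rewrite dsum_exch.
  by [].
transitivity (D a (fun a1 a2 => D a1 (fun p1 q1 => D a2 (fun p2 q2 => D b (fun b1 b2 =>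
   D b1 (fun r1 s1 => D b2 (fun r2 s2 => f (p1 * r1 * S q1 * S s1) (p2 * r2 * S q2 * S s2)))))))); last first.
  symmetry.
  transitivity (D a (fun a1 a2 => D b (fun b1 b2 => D a1 (fun p1 q1 => D b1 (fun r1 s1 =>
     D a2 (fun p2 q2 => D b2 (fun r2 s2 => f (p1 * r1 * S q1 * S s1) (p2 * r2 * S q2 * S s2)))))))).
    apply: eq_dsum => a1 a2; apply: eq_dsum => b1 b2.
    rewrite -(@dsum_pull _ a1 (fun p1 q1 => D b1 (fun r1 s1 => p1 * r1 * S q1 * S s1)) (fun z => f z (hb a2 b2))); last by slin.
    apply: eq_dsum => p1 q1.
    rewrite -(@dsum_pull _ b1 (fun r1 s1 => p1 * r1 * S q1 * S s1) (fun z => f z (hb a2 b2))); last by slin.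
    apply: eq_dsum => r1 s1.
    rewrite -(@dsum_pull _ a2 (fun p2 q2 => D b2 (fun r2 s2 => p2 * r2 * S q2 * S s2)) (fun z => f (p1 * r1 * S q1 * S s1) z)); last by slin.
    apply: eq_dsum => p2 q2.
    by rewrite -(@dsum_pull _ b2 (fun r2 s2 => p2 * r2 * S q2 * S s2) (fun z => f (p1 * r1 * S q1 * S s1) z)) //; slin.
  under eq_dsum => a1 a2 do rewrite dsum_exch.
  under eq_dsum => a1 a2 do under eq_dsum => p1 q1 do under eq_dsum => b1 b2 do rewrite dsum_exch.
  under eq_dsum => a1 a2 do under eq_dsum => p1 q1 do rewrite dsum_exch.
  by [].
transitivity (D a (fun p q => D p (fun p1 p2 => D q (fun q1 q2 => D b (fun b1 b2 =>
   D b1 (fun r1 s1 => D b2 (fun r2 s2 => f (p1 * r1 * S q1 * S s1) (p2 * r2 * S q2 * S s2)))))))).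
  apply: eq_dsum => p q; apply: eq_dsum => p1 p2; apply: eq_dsum => q1 q2.
  rewrite (@T4_bal _ b (fun r1 r2 s1 s2 => f (p1 * r1 * S q1 * S s1) (p2 * r2 * S q2 * S s2))); last by sbil.
  rewrite (@T4_sw23 _ b (fun r1 r2 s1 s2 => f (p1 * r1 * S q1 * S s1) (p2 * r2 * S q2 * S s2))); last by sbil.
  by symmetry; apply: (@T4_bal _ b (fun r1 s1 r2 s2 => f (p1 * r1 * S q1 * S s1) (p2 * r2 * S q2 * S s2))); sbil.
rewrite (@T4_bal _ a (fun p1 p2 q1 q2 => D b (fun b1 b2 =>
   D b1 (fun r1 s1 => D b2 (fun r2 s2 => f (p1 * r1 * S q1 * S s1) (p2 * r2 * S q2 * S s2)))))); last by sbil.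
rewrite (@T4_sw23 _ a (fun p1 p2 q1 q2 => D b (fun b1 b2 =>
   D b1 (fun r1 s1 => D b2 (fun r2 s2 => f (p1 * r1 * S q1 * S s1) (p2 * r2 * S q2 * S s2)))))); last by sbil.
by symmetry; apply: (@T4_bal _ a (fun p1 q1 p2 q2 => D b (fun b1 b2 =>
   D b1 (fun r1 s1 => D b2 (fun r2 s2 => f (p1 * r1 * S q1 * S s1) (p2 * r2 * S q2 * S s2)))))); sbil.
Qed.


Lemma teq_pair (z x y : A) sx sy (g h : A -> A -> A) :
  teq2 (Delta x) sx -> teq2 (Delta y) sy -> bil g -> bil h ->
  (forall (V : lmodType K) (f : A -> A -> V), bil f ->
     D z f = D x (fun x1 x2 => D y (fun y1 y2 => f (g x1 y1) (h x2 y2)))) ->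
  teq2 (Delta z) [seq (g p.1 q.1, h p.2 q.2) | p <- sx, q <- sy].
Proof.
move=> Hx Hy [g1 g2] [h1 h2] Hz V f Hf'.
have Hf : bil f.
  by case: Hf' => F1 F2; split => u k v w; [apply: F1 | apply: F2].
have [f1 f2] := Hf.
rewrite big_allpairs_dep /=.
have := Hz V f Hf; rewrite /dsum => ->.
rewrite (Hx V (fun x1 x2 => D y (fun y1 y2 => f (g x1 y1) (h x2 y2)))); last by sbil.
apply: eq_bigr => p _.
by apply: (Hy V (fun y1 y2 => f (g p.1 y1) (h p.2 y2))); sbil.
Qed.

Variables (X Y : A -> Prop).
Hypothesis HX : is_normal_hopf_sub Delta S X.
Hypothesis HY : is_normal_hopf_sub Delta S Y.

Local Notation C := (hcomm Delta S X Y).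

Lemma hbrE x y : hbr Delta S x y = hb x y. Proof. by []. Qed.

Lemma Csub : is_subalg C.
Proof.
split; [|split; [|split]].
- by move=> P [P0 _].
- by move=> k x y Cx Cy P HP HG; case: (HP) => _ [HPl _]; apply: HPl; [apply: Cx | apply: Cy].
- by move=> P [_ [_ [P1 _]]].
- by move=> x y Cx Cy P HP HG; case: (HP) => _ [_ [_ HPm]]; apply: HPm; [apply: Cx | apply: Cy].
Qed.

Lemma Cgen x y : X x -> Y y -> C (hb x y).
Proof. by move=> Xx Yy P _ HG; apply: HG; exists x, y. Qed.

Lemma Cind (P : A -> Prop) : is_subalg P -> (forall x y, X x -> Y y -> P (hb x y)) ->
  forall d, C d -> P d.
Proof. move=> HP HG d Cd; apply: Cd => // g [x [y [Xx [Yy ->]]]]; exact: HG. Qed.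

Lemma C0 : C 0. Proof. by case: Csub. Qed.
Lemma C1 : C 1. Proof. by case: Csub => _ [_ []]. Qed.
Lemma Clin k x y : C x -> C y -> C (k *: x + y). Proof. by case: Csub => _ [H _]; apply: H. Qed.
Lemma Cmul x y : C x -> C y -> C (x * y). Proof. by case: Csub => _ [_ [_ H]]; apply: H. Qed.
Lemma Cscale k x : C x -> C (k *: x). Proof. by move=> Cx; rewrite -[_ *: _]addr0; apply: Clin => //; apply: C0. Qed.
Lemma Csum (I : eqType) (s : seq I) (F : I -> A) : (forall i, i \in s -> C (F i)) -> C (\sum_(i <- s) F i).
Proof.
elim: s => [|i s IH] H; first by rewrite big_nil; apply: C0.
rewrite big_cons -[F i]scale1r; apply: Clin.
  by apply: H; rewrite inE eqxx.
by apply: IH => j Hj; apply: H; rewrite inE Hj orbT.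
Qed.
Lemma Cdsum a (F : A -> A -> A) : (forall x y, C (F x y)) -> C (D a F).
Proof. by move=> H; apply: Csum => p _; apply: H. Qed.

Lemma Cnorm a0 d0 : C d0 -> C (ad a0 d0).
Proof.
move=> Cd; refine (@Cind (fun d => forall a, C (ad a d)) _ _ d0 Cd a0); clear a0 d0 Cd.
  split; [|split; [|split]].
  - move=> a; rewrite /dsum big1; first exact: C0. by move=> p _; rewrite /= mulr0 mul0r.
  - move=> k x y Hx Hy a.
    rewrite (_ : ad a (k *: x + y) = k *: ad a x + ad a y); first by apply: Clin.
    have H : lin (fun z => ad a z) by slin.
    exact: H.
  - move=> a; rewrite (_ : ad a 1 = eps a *: 1); first by apply: Cscale; apply: C1.
    by rewrite -dsum_Sr; apply: eq_dsum => p q; rewrite mulr1.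
  - move=> x y Hx Hy a; rewrite P1; apply: Cdsum => u v; apply: Cmul; [apply: Hx | apply: Hy].
move=> x y Xx Yy a; rewrite Gad; apply: Cdsum => u v; apply: Cgen.
  by case: HX => _ Hn; apply: Hn.
by case: HY => _ Hn; apply: Hn.
Qed.

Lemma CS d : C d -> C (S d).
Proof.
move=> Cd; refine (@Cind (fun d => C (S d)) _ _ d Cd); clear d Cd.
  split; [|split; [|split]].
  - by rewrite S0; apply: C0.
  - by move=> k x y Hx Hy; rewrite HSl; apply: Clin.
  - by rewrite S1; apply: C1.
  - by move=> x y Hx Hy; rewrite SM; apply: Cmul.
move=> x y Xx Yy; rewrite Sgen.
case: HX => [[_ [XD XS]] _]; case: (XD x Xx) => sx [Hsx Htx].
rewrite (@dsum_teq _ x sx (fun x1 x2 => ad x2 (hb (S x1) y))) //; last by sbil.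
apply: Csum => p /Hsx [X1 X2]; apply: Cnorm; apply: Cgen => //; exact: XS.
Qed.

Lemma CD d : C d -> exists s : seq (A * A),
       (forall p, p \in s -> C p.1 /\ C p.2) /\ teq2 (Delta d) s.
Proof.
move=> Cd; refine (@Cind (fun d => exists s : seq (A * A),
       (forall p, p \in s -> C p.1 /\ C p.2) /\ teq2 (Delta d) s) _ _ d Cd); clear d Cd.
  split; [|split; [|split]].
  - exists [::]; split => // V f Hf; rewrite big_nil.
    have H : lin (fun z => \sum_(p <- Delta z) f p.1 p.2).
      by apply: lin_dsumA => //; case: Hf => F1 F2; split => u k v w; [apply: F1 | apply: F2].
    exact: (lin0 H).
  - move=> k x y [sx [Hsx Htx]] [sy [Hsy Hty]].
    exists ([seq (k *: p.1, p.2) | p <- sx] ++ sy); split.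
      move=> p; rewrite mem_cat => /orP [/mapP [q /Hsx [Q1 Q2] ->] | /Hsy //].
      by split => //; apply: Cscale.
    move=> V f Hf'.
    have Hf : bil f by case: Hf' => F1 F2; split => u k' v w; [apply: F1 | apply: F2].
    have [f1 f2] := Hf.
    have H : lin (fun z => D z f) by slin.
    rewrite big_cat big_map /=.
    have := H k x y; rewrite /dsum => ->.
    rewrite (Htx V f Hf') (Hty V f Hf') scaler_sumr; congr (_ + _).
    by apply: eq_bigr => p _; rewrite bilZl.
  - exists [:: (1, 1)]; split; last exact: Hd1.
    by move=> p; rewrite inE => /eqP ->; split; apply: C1.
  - move=> x y [sx [Hsx Htx]] [sy [Hsy Hty]].
    exists [seq (p.1 * q.1, p.2 * q.2) | p <- sx, q <- sy]; split.
      move=> z /allpairsP [[p q] [/Hsx [P1 P2] /Hsy [Q1 Q2] ->]] /=.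
      by split; apply: Cmul.
    apply: (@teq_pair _ x y sx sy (fun a b => a * b) (fun a b => a * b)) => //; try sbil.
    by move=> V f Hf; apply: dsum_mul.
move=> x y Xx Yy.
case: HX => [[_ [XD _]] _]; case: (XD x Xx) => sx [Hsx Htx].
case: HY => [[_ [YD _]] _]; case: (YD y Yy) => sy [Hsy Hty].
exists [seq (hb p.1 q.1, hb p.2 q.2) | p <- sx, q <- sy]; split.
  move=> z /allpairsP [[p q] [/Hsx [P1 P2] /Hsy [Q1 Q2] ->]] /=.
  by split; apply: Cgen.
apply: (@teq_pair _ x y sx sy (fun a b => hb a b) (fun a b => hb a b)) => //; try sbil.
by move=> V f Hf; apply: Dgen.
Qed.

Lemma main : is_normal_hopf_sub Delta S C.
Proof.
split; last by move=> a d Cd; apply: Cnorm.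
split; first exact: Csub.
split; [exact: CD | exact: CS].
Qed.

End Hopf.

Theorem proposition4p2 (K : fieldType) (A : algType K)
  (Delta : A -> seq (A * A)) (eps : A -> K) (S : A -> A)
  (HA : is_hopf Delta eps S) (Hcoc : cocommutative Delta)
  (X Y : A -> Prop)
  (HX : is_normal_hopf_sub Delta S X) (HY : is_normal_hopf_sub Delta S Y) :
  is_normal_hopf_sub Delta S (hcomm Delta S X Y).
Proof.
case: HA => HDl [Hco [Hel [Hcl [Hcr [Hdm [Hd1 [Hem [He1 [HSl [HSa HSb]]]]]]]]]].
exact: (main HDl Hco Hel Hcl Hcr Hdm Hd1 Hem He1 HSl HSa HSb Hcoc HX HY).
Qed.
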